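(* Let $(X_n)$ and $(Y_n)$ be sequences of real Banach spaces with $\lim_{n\to\infty}d_{GH}(X_n,Y_n)=0$. Then for every non-principal ultrafilter $\mathcal U$ on $\mathbb N$, the ultraproducts $\prod_{\mathcal U}(X_n)$ and $\prod_{\mathcal U}(Y_n)$ are isometric.
   Context: The Gromov–Hausdorff distance $d_{GH}(X,Y)$ is the infimum of the Hausdorff distance between the images of the closed unit balls $B_X,B_Y$ over all isometric embeddings of the metric spaces $B_X,B_Y$ into a common metric space. The ultraproduct $\prod_{\mathcal U}(X_n)$ is the quotient of $\ell_\infty(X_n)$ by the null space of the seminorm $\|(x_n)\|=\lim_{n\in\mathcal U}\|x_n\|_{X_n}$. *)

(* Defs.v *)
From HB Require Import structures.
From mathcomp Require Import all_boot all_order all_algebra.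
From mathcomp Require Import all_classical all_reals all_analysis.
Set Implicit Arguments. Unset Strict Implicit. Unset Printing Implicit Defensive.
Import Order.TTheory GRing.Theory Num.Theory.
Import numFieldNormedType.Exports.
Local Open Scope classical_set_scope.
Local Open Scope ring_scope.

Definition is_metric {R : realType} {Z : Type} (d : Z -> Z -> R) : Prop :=
  (forall x y, 0 <= d x y) /\ (forall x y, d x y = 0 <-> x = y) /\
  (forall x y, d x y = d y x) /\ (forall x y z, d x z <= d x y + d y z).

Definition hausdorff_dist {R : realType} {Z : Type} (d : Z -> Z -> R)
  (A B : set Z) : \bar R :=
  maxe (ereal_sup [set ereal_inf [set (d a b)%:E | b in B] | a in A])
       (ereal_sup [set ereal_inf [set (d a b)%:E | a in A] | b in B]).

Definition unit_ball {R : realType} (X : normedModType R) : set X :=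
  [set x | `|x| <= 1].

Definition ball_isometry {R : realType} (X : normedModType R) {Z : Type}
  (d : Z -> Z -> R) (f : X -> Z) : Prop :=
  forall x y, `|x| <= 1 -> `|y| <= 1 -> d (f x) (f y) = `|x - y|.

Definition dGH {R : realType} (X Y : normedModType R) : \bar R :=
  ereal_inf [set r | exists (Z : Type) (d : Z -> Z -> R) (f : X -> Z) (g : Y -> Z),
     [/\ is_metric d, ball_isometry d f, ball_isometry d g &
         r = hausdorff_dist d (f @` @unit_ball R X) (g @` @unit_ball R Y)]].

Definition linfty_bounded {R : realType} (X : nat -> normedModType R)
  (x : forall n, X n) : Prop := exists M : R, forall n, `|x n| <= M.

Definition ulim {R : realType} (U : set_system nat) (u : nat -> R) : R :=
  lim (u @ U).

Definition useminorm {R : realType} (X : nat -> normedModType R)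
  (U : set_system nat) (x : forall n, X n) : R :=
  ulim U (fun n => `|x n|).

(* The ultraproduct prod_U X_n is the quotient of l_infty(X_n) by the null
   space of useminorm.  A linear isometry of prod_U X_n onto prod_U Y_n is
   exactly a map T : l_infty(X_n) -> l_infty(Y_n) that is linear modulo the
   null space, preserves the seminorm, and is onto modulo the null space. *)
Definition ultraproducts_isometric {R : realType} (X Y : nat -> normedModType R)
  (U : set_system nat) : Prop :=
  exists T : (forall n, X n) -> (forall n, Y n),
  [/\ (forall x, linfty_bounded x -> linfty_bounded (T x)),
      (forall (a : R) x y, linfty_bounded x -> linfty_bounded y ->
         useminorm U (fun n => T (fun k => a *: x k + y k) n - (a *: T x n + T y n)) = 0),
      (forall x, linfty_bounded x -> useminorm U (T x) = useminorm U x) &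
      (forall y, linfty_bounded y -> exists2 x, linfty_bounded x &
         useminorm U (fun n => T x n - y n) = 0)].

(* Main.v *)
Require Import Defs.
From HB Require Import structures.
From mathcomp Require Import all_boot all_order all_algebra.
From mathcomp Require Import all_classical all_reals all_analysis.
From mathcomp Require Import lra ring.
Import Order.TTheory GRing.Theory Num.Theory.
Import numFieldNormedType.Exports.
Local Open Scope classical_set_scope.
Local Open Scope ring_scope.
Set Implicit Arguments. Unset Strict Implicit. Unset Printing Implicit Defensive.



Section Ulim.
Variables (R : realType) (U : set_system nat).
Hypothesis UU : UltraFilter U.
Hypothesis Unp : forall n, ~ U [set n].

Lemma U_lt N : ~ U [set n | (n < N)%N].
Proof.
elim: N => [|N IH].
  have -> : [set n | (n < 0)%N] = set0 by apply/seteqP; split => n //=.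
  by move/filter_ex => [].
move=> HU.
have [HA|HC] := in_ultra_setVsetC [set n | (n < N)%N] UU; first exact: IH.
apply: (@Unp N); apply: filterS (filterI HU HC) => n /= [].
by rewrite ltnS leq_eqVlt => /orP[/eqP -> //| ->].
Qed.

Lemma U_ge N : U [set n | (N <= n)%N].
Proof.
have [//|HC] := in_ultra_setVsetC [set n | (N <= n)%N] UU.
exfalso; apply: (@U_lt N); apply: filterS HC => n /=; rewrite ltnNge => /negP //.
Qed.

Lemma U_finer (A : set nat) : (\forall n \near \oo, A n) -> U A.
Proof. move=> [N _ HN]. have FU : Filter U by exact: _. exact: (filterS HN (U_ge N)). Qed.

Lemma ultra_fmap (T : Type) (u : nat -> T) : UltraFilter (u @ U).
Proof.
split; first exact: fmap_proper_filter.
move=> G GF sfFG; rewrite predeqE => A; split; last exact: sfFG.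
move=> GA.
have [//|FnA] := in_ultra_setVsetC (u @^-1` A) UU.
have GnA : G (~` A) by apply: sfFG.
by have /filter_ex [? []] : G (A `&` (~` A)) by exact: filterI.
Qed.

Lemma ulim_cvg (u : nat -> R) (M : R) : (forall n, `|u n| <= M) -> u @ U --> ulim U u.
Proof.
move=> Hb.
have := @segment_compact R (- M) M; rewrite compact_ultra => /(_ (u @ U) (ultra_fmap u)).
case.
  change (U (u @^-1` `[- M, M])).
  apply: (filterS (P:=setT)); last exact: filterT.
  by move=> n _ /=; rewrite in_itv /= -ler_norml.
move=> l [_ Hl].
by rewrite /ulim (cvg_lim _ Hl).
Qed.


Definition bnd (u : nat -> R) := exists M, forall n, `|u n| <= M.

Lemma ulim_cvgB (u : nat -> R) : bnd u -> u @ U --> ulim U u.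
Proof. by case=> M; exact: ulim_cvg. Qed.

Lemma ulim_eq (u : nat -> R) (l : R) : u @ U --> l -> ulim U u = l.
Proof. by move=> H; rewrite /ulim (cvg_lim _ H). Qed.

Lemma ulim_oo (u : nat -> R) (l : R) : u @ \oo --> l -> ulim U u = l.
Proof. by move=> H; apply: ulim_eq; apply: cvg_trans H => A; exact: U_finer. Qed.

Lemma bndD (u v : nat -> R) : bnd u -> bnd v -> bnd (fun n => u n + v n).
Proof.
move=> [M HM] [N HN]; exists (M + N) => n.
by apply: le_trans (ler_normD _ _) _; exact: lerD.
Qed.

Lemma bndZ (c : R) (u : nat -> R) : bnd u -> bnd (fun n => c * u n).
Proof.
move=> [M HM]; exists (`|c| * M) => n.
by rewrite normrM; apply: ler_wpM2l.
Qed.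

Lemma ulimD (u v : nat -> R) : bnd u -> bnd v -> ulim U (fun n => u n + v n) = ulim U u + ulim U v.
Proof.
move=> bu bv; apply: ulim_eq.
exact: (cvgD (ulim_cvgB bu) (ulim_cvgB bv)).
Qed.

Lemma ulimZ (c : R) (u : nat -> R) : bnd u -> ulim U (fun n => c * u n) = c * ulim U u.
Proof.
move=> bu; apply: ulim_eq.
exact: (cvgMr (ulim_cvgB bu)).
Qed.

Lemma ulim_le (u v : nat -> R) : bnd u -> bnd v -> (forall n, u n <= v n) -> ulim U u <= ulim U v.
Proof.
move=> bu bv H; rewrite /ulim; apply: ler_lim.
- exact: (cvgP _ (ulim_cvgB bu)).
- exact: (cvgP _ (ulim_cvgB bv)).
- by apply: (filterS (P:=setT)); [move=> n _; exact: H| exact: filterT].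
Qed.

Lemma ulim_cst (c : R) : ulim U (fun _ => c) = c.
Proof. by apply: ulim_eq; exact: cvg_cst. Qed.

End Ulim.
Section Dprod.
Variables (R : realType) (X : nat -> lmodType R).
Definition dprod := forall n, X n.
HB.instance Definition _ := gen_eqMixin dprod.
HB.instance Definition _ := gen_choiceMixin dprod.
Definition dzero : dprod := fun n => 0.
Definition dadd (x y : dprod) : dprod := fun n => x n + y n.
Definition dopp (x : dprod) : dprod := fun n => - x n.
Definition dscale (a : R) (x : dprod) : dprod := fun n => a *: x n.
Let fe := @functional_extensionality_dep.
Lemma daddA : associative dadd.
Proof. by move=> x y z; apply: fe => n; rewrite /dadd addrA. Qed.
Lemma daddC : commutative dadd.
Proof. by move=> x y; apply: fe => n; rewrite /dadd addrC. Qed.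
Lemma dadd0 : left_id dzero dadd.
Proof. by move=> x; apply: fe => n; rewrite /dadd /dzero add0r. Qed.
Lemma daddN : left_inverse dzero dopp dadd.
Proof. by move=> x; apply: fe => n; rewrite /dadd /dzero /dopp addNr. Qed.
HB.instance Definition _ := GRing.isZmodule.Build dprod daddA daddC dadd0 daddN.
Lemma dscaleA a b v : dscale a (dscale b v) = dscale (a * b) v.
Proof. by apply: fe => n; rewrite /dscale scalerA. Qed.
Lemma dscale1 : left_id 1 dscale.
Proof. by move=> x; apply: fe => n; rewrite /dscale scale1r. Qed.
Lemma dscaleDr : right_distributive dscale +%R.
Proof. by move=> a x y; apply: fe => n; rewrite /dscale /= /dadd scalerDr. Qed.
Lemma dscaleDl v : {morph dscale^~ v: a b / a + b}.
Proof. by move=> a b; apply: fe => n; rewrite /dscale /= /dadd scalerDl. Qed.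
HB.instance Definition _ := GRing.Zmodule_isLmodule.Build R dprod dscaleA dscale1 dscaleDr dscaleDl.
Lemma dprod_addE (x y : dprod) n : (x + y) n = x n + y n. Proof. by []. Qed.
Lemma dprod_oppE (x : dprod) n : (- x) n = - x n. Proof. by []. Qed.
Lemma dprod_scaleE a (x : dprod) n : (a *: x) n = a *: x n. Proof. by []. Qed.
Lemma dprod_zeroE n : (0 : dprod) n = 0. Proof. by []. Qed.
End Dprod.
Section T. Variables (R : realType) (X : nat -> lmodType R). 
Goal forall (a : R) (x y : @dprod R X), (fun k => a *: x k + y k) = a *: x + y. by []. Qed.
Goal forall (x y : @dprod R X), (fun k => x k - y k) = x - y. by []. Qed.
End T.
Section SNdef.
Variable R : realType.
Record SN (V : lmodType R) := mkSN {
  snB : V -> Prop; snp : V -> R;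
  snB0 : snB 0;
  snBD : forall x y, snB x -> snB y -> snB (x + y);
  snBZ : forall (a : R) x, snB x -> snB (a *: x);
  snpD : forall x y, snB x -> snB y -> snp (x + y) <= snp x + snp y;
  snpZ : forall (a : R) x, snB x -> snp (a *: x) = `|a| * snp x }.
End SNdef.

Section SNtheory.
Variables (R : realType) (V : lmodType R) (S : SN V).
Local Notation B := (snB S).
Local Notation p := (snp S).

Lemma BN x : B x -> B (- x).
Proof. by move=> Bx; rewrite -scaleN1r; exact: snBZ. Qed.
Lemma BB x y : B x -> B y -> B (x - y).
Proof. by move=> Bx By; apply: snBD => //; exact: BN. Qed.
Lemma pN x : B x -> p (- x) = p x.
Proof. by move=> Bx; rewrite -scaleN1r snpZ // normrN normr1 mul1r. Qed.
Lemma p0 : p 0 = 0.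
Proof. by rewrite -(scale0r (0 : V)) snpZ ?normr0 ?mul0r //; exact: snB0. Qed.
Lemma p_ge0 x : B x -> 0 <= p x.
Proof.
move=> Bx; have := snpD Bx (BN Bx); rewrite subrr p0 pN //.
by move=> H; lra.
Qed.
Lemma pB_sym x y : B x -> B y -> p (x - y) = p (y - x).
Proof. by move=> Bx By; rewrite -[LHS]pN ?opprB //; exact: BB. Qed.
Lemma p_tri x y z : B x -> B y -> B z -> p (x - z) <= p (x - y) + p (y - z).
Proof.
move=> Bx By Bz; have -> : x - z = (x - y) + (y - z) by rewrite addrA subrK.
by apply: snpD; exact: BB.
Qed.

Definition eqv x y := p (x - y) = 0.

Lemma eqv_refl x : eqv x x.
Proof. by rewrite /eqv subrr p0. Qed.
Lemma eqv_sym x y : B x -> B y -> eqv x y -> eqv y x.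
Proof. by move=> Bx By; rewrite /eqv pB_sym. Qed.
Lemma p_eqvl x x' y : B x -> B x' -> B y -> eqv x x' -> p (x - y) = p (x' - y).
Proof.
move=> Bx Bx' By; rewrite /eqv => H; apply/eqP; rewrite eq_le; apply/andP; split.
  by apply: le_trans (p_tri Bx Bx' By) _; rewrite H add0r.
by apply: le_trans (p_tri Bx' Bx By) _; rewrite pB_sym // H add0r.
Qed.
Lemma p_eqvr x y y' : B x -> B y -> B y' -> eqv y y' -> p (x - y) = p (x - y').
Proof.
move=> Bx By By' H; rewrite (pB_sym Bx By) (pB_sym Bx By').
exact: p_eqvl.
Qed.
Lemma eqv_trans x y z : B x -> B y -> B z -> eqv x y -> eqv y z -> eqv x z.
Proof. by move=> Bx By Bz H1 H2; rewrite /eqv (p_eqvl Bx By Bz H1). Qed.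
Lemma eqvZ (a : R) x y : B x -> B y -> eqv x y -> eqv (a *: x) (a *: y).
Proof. by move=> Bx By H; rewrite /eqv -scalerBr snpZ ?H ?mulr0 //; exact: BB. Qed.
Lemma eqvZ_inv (a : R) x y : a != 0 -> B x -> B y -> eqv (a *: x) (a *: y) -> eqv x y.
Proof.
move=> a0 Bx By; rewrite /eqv -scalerBr snpZ; last exact: BB.
move=> /eqP.
by rewrite mulf_eq0 normr_eq0 (negbTE a0) /= => /eqP.
Qed.
Lemma eqvD x x' y y' : B x -> B x' -> B y -> B y' -> eqv x x' -> eqv y y' ->
  eqv (x + y) (x' + y').
Proof.
move=> Bx Bx' By By' H1 H2; rewrite /eqv.
have -> : x + y - (x' + y') = (x - x') + (y - y').
  by rewrite opprD addrACA.
have := snpD (BB Bx Bx') (BB By By'); rewrite /eqv in H1 H2; rewrite H1 H2 addr0 => Hle.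
apply/eqP; rewrite eq_le Hle /=; apply: p_ge0; apply: snBD; exact: BB.
Qed.
Lemma eqvN x y : B x -> B y -> eqv x y -> eqv (- x) (- y).
Proof. by move=> Bx By H; have := eqvZ (-1) Bx By H; rewrite !scaleN1r. Qed.
End SNtheory.

Section Iso.
Variables (R : realType).
Definition iso (V W : lmodType R) (S : SN V) (S' : SN W) (g : V -> W) :=
  (forall x, snB S x -> snB S' (g x)) /\
  (forall x y, snB S x -> snB S y -> snp S' (g x - g y) = snp S (x - y)).

Variables (V W Z : lmodType R) (S : SN V) (S' : SN W) (S'' : SN Z).

Lemma iso_id : iso S S id.
Proof. by split. Qed.

Lemma iso_comp (g : V -> W) (h : W -> Z) : iso S S' g -> iso S' S'' h -> iso S S'' (h \o g).
Proof.
move=> [g1 g2] [h1 h2]; split => [x Bx|x y Bx By] /=; first by apply: h1; apply: g1.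
by rewrite h2 ?g2 //; apply: g1.
Qed.

Lemma iso_eqv (g : V -> W) x y : iso S S' g -> snB S x -> snB S y -> eqv S x y ->
  eqv S' (g x) (g y).
Proof. by move=> [_ g2] Bx By; rewrite /eqv g2. Qed.

Lemma iso_inv (g : V -> W) (h : W -> V) : iso S S' g -> iso S' S h ->
  (forall y, snB S' y -> eqv S' (g (h y)) y) ->
  forall x, snB S x -> eqv S (h (g x)) x.
Proof.
move=> [g1 g2] [h1 h2] H x Bx.
rewrite /eqv -g2 //; first exact: (H (g x) (g1 _ Bx)).
by apply: h1; apply: g1.
Qed.

Lemma iso_refl (c : V) : snB S c -> iso S S (fun x => c - x).
Proof.
move=> Bc; split => [x Bx|x y Bx By]; first exact: BB.
by rewrite opprB addrC addrA subrK pB_sym.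
Qed.
End Iso.
Ltac bsolve := repeat first [ assumption | apply: snB0 | apply: snBD | apply: snBZ | apply: BN | apply: BB
  | match goal with H : iso _ _ ?f |- snB _ (?f _) => apply: (proj1 H) end ].

Section Vaisala.
Variables (R : realType) (V : lmodType R) (S : SN V).
Local Notation B := (snB S).
Local Notation p := (snp S).
Local Notation eqv := (eqv S).
Variables (a b : V).
Hypotheses (Ba : B a) (Bb : B b).
Definition zmid := 2^-1 *: (a + b).
Definition psi x := a + b - x.
Local Notation z := zmid.
Definition Wg g := iso S S g /\ (exists h, iso S S h /\ forall x, B x -> eqv (g (h x)) x)
   /\ eqv (g a) a /\ eqv (g b) b.

Lemma Bz : B z. Proof. by rewrite /zmid; bsolve. Qed.
Lemma z2 : a + b = z + z.
Proof. rewrite /zmid -scalerDl; have -> : (2^-1 + 2^-1 : R) = 1 by field. by rewrite scale1r. Qed.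
Lemma psiz : psi z = z. Proof. by rewrite /psi z2 addrK. Qed.
Lemma psiK x : psi (psi x) = x. Proof. exact: subKr. Qed.
Lemma psia : psi a = b. Proof. by rewrite /psi (addrC a b) addrK. Qed.
Lemma psib : psi b = a. Proof. by rewrite /psi addrK. Qed.
Lemma psi_iso : iso S S psi. Proof. by apply: iso_refl; bsolve. Qed.

Lemma Wg_bound g : Wg g -> p (g z - z) <= 2 * p (z - a).
Proof.
case=> giso [_ [ga _]].
have Bz := Bz.
apply: le_trans (p_tri (y := g a) _ _ _) _; try bsolve.
rewrite (proj2 giso) // (p_eqvl _ _ _ ga); try bsolve.
by rewrite (pB_sym Ba Bz); lra.
Qed.

Lemma Wg_star g : Wg g -> exists g', Wg g' /\ p (g' z - z) = 2 * p (g z - z).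
Proof.
case=> giso [[h [hiso gh]] [ga gb]].
have hg := iso_inv giso hiso gh.
have psii := psi_iso.
have Bz := Bz.
exists (fun x => psi (h (psi (g x)))); split; first split.
- exact: (iso_comp (iso_comp (iso_comp giso psii) hiso) psii).
- split; first exists (fun x => h (psi (g (psi x)))); first split.
  + exact: (iso_comp (iso_comp (iso_comp psii giso) psii) hiso).
  + move=> x Bx.
    set u := psi (g (psi x)).
    have Bu : B u by rewrite /u; bsolve.
    apply: (eqv_trans (y := psi (psi x))); try bsolve; last by rewrite psiK; exact: eqv_refl.
    apply: (iso_eqv psii); try bsolve.
    apply: (eqv_trans (y := h (g (psi x)))); try bsolve; last by apply: hg; bsolve.
    apply: (iso_eqv hiso); try bsolve.
    rewrite -[X in eqv _ X]psiK.
    apply: (iso_eqv psii); try bsolve.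
    exact: gh.
  + have hb : eqv (h b) b.
      apply: (eqv_trans (y := h (g b))); try bsolve; last by apply: hg; bsolve.
      apply: (iso_eqv hiso); try bsolve; by apply: eqv_sym; bsolve.
    have ha : eqv (h a) a.
      apply: (eqv_trans (y := h (g a))); try bsolve; last by apply: hg; bsolve.
      apply: (iso_eqv hiso); try bsolve; by apply: eqv_sym; bsolve.
    split.
    * rewrite -[X in eqv _ X]psib; apply: (iso_eqv psii); try bsolve.
      apply: (eqv_trans (y := h b)); try bsolve => //.
      apply: (iso_eqv hiso); try bsolve.
      rewrite -[X in eqv _ X]psia; apply: (iso_eqv psii); try bsolve.
    * rewrite -[X in eqv _ X]psia; apply: (iso_eqv psii); try bsolve.
      apply: (eqv_trans (y := h a)); try bsolve => //.
      apply: (iso_eqv hiso); try bsolve.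
      rewrite -[X in eqv _ X]psib; apply: (iso_eqv psii); try bsolve.
- rewrite -[X in p (_ - X)]psiz (proj2 psii); try bsolve.
  rewrite (p_eqvr (y' := h (g z))); try bsolve; last by apply: eqv_sym; try bsolve; apply: hg; bsolve.
  rewrite (proj2 hiso); try bsolve.
  have -> : psi (g z) - g z = 2 *: (z - g z).
    rewrite /psi z2 scaler_nat mulr2n.
    by rewrite -addrA addrACA.
  rewrite snpZ; try bsolve.
  by rewrite pB_sym; try bsolve; rewrite ger0_norm.
Qed.

Lemma vaisala g : Wg g -> eqv (g z) z.
Proof.
move=> Wgg.
pose E := [set r | exists g, Wg g /\ r = p (g z - z)].
have Wid : Wg id.
  split; first exact: iso_id.
  split; first by exists id; split; [exact: iso_id| move=> x _; exact: eqv_refl].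
  by split; exact: eqv_refl.
have hs : has_sup E.
  split; first by exists (p (id z - z)); exists id.
  by exists (2 * p (z - a)) => r [g' [Wg' ->]]; exact: Wg_bound.
have E0 : E (p (z - z)) by exists id.
have ub : ubound E (sup E / 2).
  move=> r [g' [Wg' ->]].
  have [g'' [Wg'' Heq]] := Wg_star Wg'.
  have : p (g'' z - z) <= sup E by apply: sup_upper_bound => //; exists g''.
  rewrite Heq; lra.
have := ge_sup (ex_intro _ _ E0) ub.
have := sup_upper_bound hs E0.
rewrite subrr p0 => H0 H1.
have : p (g z - z) <= sup E by apply: sup_upper_bound => //; exists g.
have : 0 <= p (g z - z) by apply: p_ge0; case: Wgg => gi _; bsolve; exact: Bz.
rewrite /eqv; lra.
Qed.
End Vaisala.
Lemma small_le0 (R : realType) (d c : R) : (forall k : nat, d <= c / k.+1%:R) -> d <= 0.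
Proof.
move=> H; rewrite leNgt; apply/negP => d0.
have := truncnS_gt (c / d); set k := Num.trunc (c / d) => Hk.
have := H k; rewrite ler_pdivlMr // => Hc.
have : c / d * d < k.+1%:R * d by rewrite ltr_pM2r.
rewrite -mulrA mulVf ?gt_eqF // mulr1 mulrC; lra.
Qed.

Section MU.
Variables (R : realType) (V W : lmodType R) (S : SN V) (S' : SN W).
Variables (F : V -> W) (G : W -> V).
Hypotheses (Fiso : iso S S' F) (Giso : iso S' S G)
  (FG : forall w, snB S' w -> eqv S' (F (G w)) w).
Local Notation B := (snB S).
Local Notation B' := (snB S').
Local Notation p := (snp S).
Local Notation p' := (snp S').
Let GF := iso_inv Fiso Giso FG.

Lemma MU_mid a b : B a -> B b -> eqv S' (F (zmid a b)) (2^-1 *: (F a + F b)).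
Proof.
move=> Ba Bb.
have Bz : B (zmid a b) by apply: Bz.
have psii := psi_iso Ba Bb.
have BFa : B' (F a) by bsolve.
have BFb : B' (F b) by bsolve.
have psii' := psi_iso BFa BFb.
set psi' := psi (F a) (F b).
pose g x := psi a b (G (psi' (F x))).
have Wgg : Wg S a b g.
  split; first exact: (iso_comp (iso_comp (iso_comp Fiso psii') Giso) psii).
  split; first exists (fun x => G (psi' (F (psi a b x)))); first split.
  - exact: (iso_comp (iso_comp (iso_comp psii Fiso) psii') Giso).
  - move=> x Bx; rewrite /g.
    rewrite -[X in eqv _ _ X](psiK a b x).
    apply: (iso_eqv psii); try bsolve.
    apply: (eqv_trans (y := G (F (psi a b x)))); try bsolve; last by apply: GF; bsolve.
    apply: (iso_eqv Giso); try bsolve.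
    rewrite -[X in eqv _ _ X](psiK (F a) (F b)).
    apply: (iso_eqv psii'); try bsolve.
    by apply: FG; bsolve.
  - rewrite /g; split.
    + rewrite /psi' psia -[X in eqv _ _ X](psib a b).
      apply: (iso_eqv psii); try bsolve; by apply: GF.
    + rewrite /psi' psib -[X in eqv _ _ X](psia a b).
      apply: (iso_eqv psii); try bsolve; by apply: GF.
have := vaisala Ba Bb Wgg; rewrite /g => H1.
have H2 : eqv S (G (psi' (F (zmid a b)))) (zmid a b).
  rewrite -[X in eqv _ _ X](psiz a b) -[X in eqv _ X](psiK a b).
  by apply: (iso_eqv psii); try bsolve; rewrite psiz.
have H3 : eqv S' (psi' (F (zmid a b))) (F (zmid a b)).
  apply: (eqv_trans (y := F (G (psi' (F (zmid a b)))))); try bsolve.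
    by apply: eqv_sym; try bsolve; apply: FG; bsolve.
  by apply: (iso_eqv Fiso); try bsolve.
set m := 2^-1 *: (F a + F b).
have Bm : B' m by rewrite /m; bsolve.
move: H3; rewrite /eqv /psi' /psi.
have -> : F a + F b = m + m by exact: z2.
have -> : m + m - F (zmid a b) - F (zmid a b) = (-2) *: (F (zmid a b) - m).
  by rewrite scaleNr scaler_nat mulr2n opprD !opprB -addrA addrACA.
rewrite snpZ; last by bsolve.
by move/eqP; rewrite mulf_eq0 normr_eq0 oppr_eq0 pnatr_eq0 /= => /eqP.
Qed.

End MU.
Section MUlin.
Variables (R : realType) (V W : lmodType R) (S : SN V) (S' : SN W).
Variables (F : V -> W) (G : W -> V).
Hypotheses (Fiso : iso S S' F) (Giso : iso S' S G)
  (FG : forall w, snB S' w -> eqv S' (F (G w)) w) (F0 : F 0 = 0).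
Local Notation B := (snB S).
Local Notation B' := (snB S').
Local Notation p := (snp S).
Local Notation p' := (snp S').
Let Mid := MU_mid Fiso Giso FG.

Lemma MU_half x : B x -> eqv S' (F (2^-1 *: x)) (2^-1 *: F x).
Proof.
move=> Bx; have := Mid Bx (snB0 S); rewrite /zmid addr0 F0 addr0; exact.
Qed.

Lemma MU_add x y : B x -> B y -> eqv S' (F (x + y)) (F x + F y).
Proof.
move=> Bx By.
have H1 := Mid Bx By.
have H2 := MU_half (snBD Bx By).
apply: (eqvZ_inv (a := 2^-1)); try bsolve.
  by rewrite invr_eq0 pnatr_eq0.
apply: (eqv_trans (y := F (2^-1 *: (x + y)))); try bsolve.
by apply: eqv_sym; try bsolve.
Qed.

Lemma MU_opp x : B x -> eqv S' (F (- x)) (- F x).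
Proof.
move=> Bx; have := MU_add Bx (BN Bx); rewrite subrr F0 /eqv sub0r pN; last by bsolve.
by rewrite opprK addrC.
Qed.

Lemma MU_nat n x : B x -> eqv S' (F (n%:R *: x)) (n%:R *: F x).
Proof.
move=> Bx; elim: n => [|n IH]; first by rewrite !scale0r F0; exact: eqv_refl.
rewrite -addn1 natrD !scalerDl !scale1r.
apply: (eqv_trans (y := F (n%:R *: x) + F x)); try bsolve.
  by apply: MU_add; bsolve.
apply: eqvD; try bsolve => //; exact: eqv_refl.
Qed.

Lemma MU_int (m : int) x : B x -> eqv S' (F (m%:~R *: x)) (m%:~R *: F x).
Proof.
move=> Bx; case: m => n; first exact: MU_nat.
rewrite NegzE intrN !scaleNr.
apply: (eqv_trans (y := - F (n.+1%:R *: x))); try bsolve.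
  by apply: MU_opp; bsolve.
apply: eqvN; try bsolve; by apply: MU_nat; bsolve.
Qed.

Lemma MU_inv (k : nat) x : B x -> eqv S' (F (k.+1%:R^-1 *: x)) (k.+1%:R^-1 *: F x).
Proof.
move=> Bx.
have Hk : (k.+1%:R : R) != 0 by rewrite pnatr_eq0.
have H := MU_nat k.+1 (snBZ (k.+1%:R^-1) Bx).
rewrite scalerA mulfV // scale1r in H.
apply: (eqvZ_inv (a := k.+1%:R)) => //; try bsolve.
rewrite scalerA mulfV // scale1r.
by apply: eqv_sym; try bsolve.
Qed.

Lemma MU_rat (m : int) (k : nat) x : B x ->
  eqv S' (F ((m%:~R / k.+1%:R) *: x)) ((m%:~R / k.+1%:R) *: F x).
Proof.
move=> Bx; rewrite -!scalerA.
apply: (eqv_trans (y := m%:~R *: F (k.+1%:R^-1 *: x))); try bsolve.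
  by apply: MU_int; bsolve.
apply: eqvZ; try bsolve; exact: MU_inv.
Qed.

Lemma MU_hom t x : B x -> eqv S' (F (t *: x)) (t *: F x).
Proof.
move=> Bx.
have BFx : B' (F x) by bsolve.
set d := p' (F (t *: x) - t *: F x).
have d0 : 0 <= d by rewrite /d; apply: p_ge0; bsolve.
suff : d <= 0 by rewrite /eqv -/d => H; apply/eqP; rewrite eq_le H d0.
apply: (small_le0 (c := p x + p' (F x))) => k.
set N : R := k.+1%:R.
have N0 : 0 < N by rewrite /N ltr0n.
set m := Num.floor (t * N).
set q : R := m%:~R / N.
have /andP [h1 h2] := floor_itv (t * N); rewrite -/m intrD in h2.
have eq1 : t - q = (t * N - m%:~R) / N by rewrite /q; field; rewrite gt_eqF.
have hq : `|t - q| <= N^-1.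
  rewrite eq1 ger0_norm; last by rewrite divr_ge0 ?subr_ge0 // ltW.
  by rewrite -[X in _ <= X]mul1r ler_pM2r ?invr_gt0 //; lra.
have e1 : p' (F (t *: x) - F (q *: x)) = `|t - q| * p x.
  by rewrite (proj2 Fiso) -?scalerBl ?snpZ //; bsolve.
have e2 : p' (F (q *: x) - q *: F x) = 0 by apply: MU_rat.
have e3 : p' (q *: F x - t *: F x) = `|t - q| * p' (F x).
  by rewrite -scalerBl snpZ // distrC.
have tri1 := p_tri (y := F (q *: x)) (x := F (t *: x)) (z := t *: F x).
have tri2 := p_tri (y := q *: F x) (x := F (q *: x)) (z := t *: F x).
have px0 : 0 <= p x by apply: p_ge0.
have pFx0 : 0 <= p' (F x) by apply: p_ge0.
have hb : `|t - q| * (p x + p' (F x)) <= N^-1 * (p x + p' (F x)).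
  by apply: ler_wpM2r => //; lra.
rewrite mulrDr in hb.
have := tri1 S'; have := tri2 S'.
rewrite e1 e2 e3 -/d.
move=> T2 T1.
have T2' := T2 ltac:(bsolve) ltac:(bsolve) ltac:(bsolve).
have T1' := T1 ltac:(bsolve) ltac:(bsolve) ltac:(bsolve).
apply: (le_trans T1'); rewrite add0r in T2'; apply: le_trans (lerD (lexx _) T2') _.
by rewrite [X in _ <= X]mulrC.
Qed.

Lemma MU_lin (a : R) x y : B x -> B y -> eqv S' (F (a *: x + y)) (a *: F x + F y).
Proof.
move=> Bx By.
apply: (eqv_trans (y := F (a *: x) + F y)); try bsolve.
  by apply: MU_add; bsolve.
apply: eqvD; try bsolve; [exact: MU_hom | exact: eqv_refl].
Qed.
End MUlin.
Lemma cvg_bnd (R : realType) (u : nat -> R) (l : R) : u @ \oo --> l -> bnd u.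
Proof.
move=> H; have := cvg_seq_bounded (cvgP _ H); case=> M [_ HM].
exists (M + 1) => n; apply: (HM (M + 1)) => //; lra.
Qed.

Section SeqSN.
Variables (R : realType) (X : nat -> normedModType R) (U : set_system nat).
Hypotheses (UU : UltraFilter U) (Unp : forall n, ~ U [set n]).
Local Notation D := (@dprod R (fun n => X n)).

Lemma bnd_norm (x : D) : linfty_bounded x -> bnd (fun n => `|x n|).
Proof. by case=> M HM; exists M => n; rewrite normr_id. Qed.

Lemma lb0 : linfty_bounded (0 : D).
Proof. by exists 0 => n; rewrite dprod_zeroE normr0. Qed.
Lemma lbD (x y : D) : linfty_bounded x -> linfty_bounded y -> linfty_bounded (x + y).
Proof.
move=> [M HM] [N HN]; exists (M + N) => n; rewrite dprod_addE.
by apply: le_trans (ler_normD _ _) _; exact: lerD.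
Qed.
Lemma lbZ (a : R) (x : D) : linfty_bounded x -> linfty_bounded (a *: x).
Proof.
move=> [M HM]; exists (`|a| * M) => n; rewrite dprod_scaleE normrZ.
apply: ler_wpM2l => //; exact: HM.
Qed.
Lemma usD (x y : D) : linfty_bounded x -> linfty_bounded y ->
  useminorm U (x + y) <= useminorm U x + useminorm U y.
Proof.
move=> bx bY; rewrite /useminorm -ulimD //; try exact: bnd_norm.
apply: ulim_le => //; first exact/bnd_norm/lbD.
  by apply: bndD; exact: bnd_norm.
by move=> n; rewrite dprod_addE; exact: ler_normD.
Qed.
Lemma usZ (a : R) (x : D) : linfty_bounded x ->
  useminorm U (a *: x) = `|a| * useminorm U x.
Proof.
move=> bx; rewrite /useminorm -ulimZ //; last exact: bnd_norm.
congr ulim; apply: funext => n; by rewrite dprod_scaleE normrZ.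
Qed.

Definition seqSN : SN D := mkSN lb0 lbD lbZ usD usZ.
End SeqSN.
Lemma iso_from_inv (R : realType) (V W : lmodType R) (S : SN V) (S' : SN W)
  (F : V -> W) (G : W -> V) :
  iso S S' F -> (forall w, snB S' w -> snB S (G w)) ->
  (forall w, snB S' w -> eqv S' (F (G w)) w) -> iso S' S G.
Proof.
move=> Fiso G1 FG; split => // x y Bx By.
have BFGx : snB S' (F (G x)) by apply: (proj1 Fiso); exact: G1.
have BFGy : snB S' (F (G y)) by apply: (proj1 Fiso); exact: G1.
rewrite -((proj2 Fiso) _ _ (G1 _ Bx) (G1 _ By)).
rewrite (p_eqvl BFGx Bx BFGy (FG _ Bx)).
by rewrite (p_eqvr Bx BFGy By (FG _ By)).
Qed.

Unset Implicit Arguments.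
Section Construct.
Variables (R : realType) (X Y : nat -> normedModType R) (U : set_system nat).
Hypotheses (UU : UltraFilter U) (Unp : forall n, ~ U [set n]).
Variables (phi : forall n, X n -> Y n) (eps : nat -> R).
Hypotheses (eps_cvg : eps @ \oo --> 0)
 (phiB : forall n (x : X n), `|x| <= 1 -> `|phi n x| <= 1)
 (phiI : forall n (x y : X n), `|x| <= 1 -> `|y| <= 1 ->
     `| `|phi n x - phi n y| - `|x - y| | <= eps n)
 (phiS : forall n (y : Y n), `|y| <= 1 ->
     exists2 x : X n, `|x| <= 1 & `|phi n x - y| <= eps n).

Lemma eps_ge0 n : 0 <= eps n.
Proof.
have h0 : `|(0 : X n)| <= 1 by rewrite normr0 ler01.
by have := phiI n 0 0 h0 h0; rewrite !subrr !normr0 subrr normr0.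
Qed.

Definition eta n := eps n + harmonic n.
Lemma eta_gt0 n : 0 < eta n.
Proof. by rewrite /eta; have := eps_ge0 n; have := @harmonic_gt0 R n; lra. Qed.
Lemma eps_le_eta n : eps n <= eta n.
Proof. by rewrite /eta lerDl; exact: harmonic_ge0. Qed.
Lemma eta_cvg : eta @ \oo --> 0.
Proof. have := cvgD eps_cvg (@cvg_harmonic R); rewrite addr0 => H; exact: H. Qed.

Definition s n := Num.sqrt (eta n).
Lemma s_gt0 n : 0 < s n.
Proof. by rewrite /s sqrtr_gt0; exact: eta_gt0. Qed.
Lemma s_cvg : s @ \oo --> 0.
Proof.
rewrite -sqrtr0; apply: (cvg_comp _ _ eta_cvg).
exact: sqrt_continuous.
Qed.
Lemma ss n : s n * s n = eta n.
Proof. by rewrite -expr2 sqr_sqrtr // ltW // eta_gt0. Qed.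
Lemma eta_s n : (s n)^-1 * eta n = s n.
Proof. by rewrite -ss mulrA mulVf ?mul1r // gt_eqF // s_gt0. Qed.


Lemma phiI' n (x y : X n) : `|x| <= 1 -> `|y| <= 1 ->
  `| `|phi n x - phi n y| - `|x - y| | <= eta n.
Proof. by move=> hx hy; apply: le_trans (phiI n x y hx hy) (eps_le_eta n). Qed.

Lemma phi0 n : `|phi n 0| <= 2 * eta n.
Proof.
have h0 : `|(0 : X n)| <= 1 by rewrite normr0 ler01.
set c := phi n 0.
have c1 : `|c| <= 1 by exact: phiB.
have e0 := eta_gt0 n.
case: (eqVneq c 0) => [->|c0]; first by rewrite normr0; lra.
have nc0 : 0 < `|c| by rewrite normr_gt0.
set y' := - (`|c|^-1 *: c).
have ny' : `|y'| = 1.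
  by rewrite /y' normrN normrZ ger0_norm ?invr_ge0 ?ltW // mulVf // gt_eqF.
have ny1 : `|y'| <= 1 by rewrite ny'.
have [x' hx' hphi] := phiS n y' ny1.
have hyc : `|y' - c| = 1 + `|c|.
  have -> : y' - c = - ((`|c|^-1 + 1) *: c) by rewrite /y' scalerDl scale1r opprD.
  by rewrite normrN normrZ ger0_norm ?mulrDl ?mulVf ?mul1r ?gt_eqF //; lra.
have t1 : `|y' - c| <= `|y' - phi n x'| + `|phi n x' - c|.
  have -> : y' - c = (y' - phi n x') + (phi n x' - c) by rewrite addrA subrK.
  exact: ler_normD.
have t2 := phiI' n x' 0 hx' h0.
rewrite subr0 -/c in t2.
rewrite ler_norml in t2; case/andP: t2 => _ t2.
rewrite [X in _ <= X + _]distrC hyc in t1.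
have := eps_le_eta n; lra.
Qed.


Local Notation DX := (@dprod R (fun n => X n)).
Local Notation DY := (@dprod R (fun n => Y n)).

Definition T (x : DX) : DY := fun n =>
  if `|s n *: x n| <= 1 then (s n)^-1 *: (phi n (s n *: x n) - phi n 0) else 0.

Lemma T0 : T 0 = 0.
Proof.
apply: functional_extensionality_dep => n.
by rewrite /T dprod_zeroE scaler0 normr0 ler01 subrr scaler0.
Qed.

Lemma T_diff n (x y : DX) : `|s n *: x n| <= 1 -> `|s n *: y n| <= 1 ->
  `| `|T x n - T y n| - `|x n - y n| | <= s n.
Proof.
move=> hx hy; rewrite /T hx hy.
have sp := s_gt0 n.
have si : 0 <= (s n)^-1 by rewrite invr_ge0 ltW.
rewrite -scalerBr opprB addrA subrK normrZ ger0_norm //.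
have -> : `|x n - y n| = (s n)^-1 * `|s n *: x n - s n *: y n|.
  by rewrite -scalerBr normrZ ger0_norm ?ltW // mulrA mulVf ?mul1r // gt_eqF.
rewrite -mulrBr normrM ger0_norm // -[X in _ <= X]eta_s.
by apply: ler_wpM2l => //; exact: phiI'.
Qed.

Lemma ev_small (u : nat -> R) (e : R) : u @ \oo --> 0 -> 0 < e ->
  \forall n \near \oo, u n <= e.
Proof.
move=> H e0; have [N _ HN] := (cvgrPdist_le _ _).1 H e e0.
exists N => // n /HN /=; rewrite sub0r normrN; apply: le_trans; exact: ler_norm.
Qed.

Lemma ev_ball (x : DX) : linfty_bounded x -> \forall n \near \oo, `|s n *: x n| <= 1.
Proof.
case=> M HM.
have M'0 : 0 < `|M| + 1 by have := normr_ge0 M; lra.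
have e0 : 0 < (`|M| + 1)^-1 by rewrite invr_gt0.
have [N _ HN] := ev_small _ _ s_cvg e0.
exists N => // n /HN /= Hn.
rewrite normrZ ger0_norm; last exact/ltW/s_gt0.
have Mn0 : `|M| + 1 != 0 by rewrite gt_eqF.
have hx : `|x n| <= `|M| + 1 by apply: le_trans (HM n) _; have := ler_norm M; lra.
apply: le_trans (ler_wpM2l (ltW (s_gt0 n)) hx) _.
apply: le_trans (ler_wpM2r (ltW M'0) Hn) _; by rewrite mulVf.
Qed.


Lemma Tb (x : DX) : linfty_bounded x -> linfty_bounded (T x).
Proof.
move=> bx; have [M HM] := bx; have [K HK] := cvg_bnd s_cvg.
exists (M + K) => n.
have M0 : 0 <= M := le_trans (normr_ge0 _) (HM 0%N).
have K0 : 0 <= K := le_trans (normr_ge0 _) (HK 0%N).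
case: (boolP (`|s n *: x n| <= 1)) => h.
- have h0 : `|s n *: (0 : DX) n| <= 1 by rewrite dprod_zeroE scaler0 normr0 ler01.
  have := T_diff n x 0 h h0; rewrite T0 !dprod_zeroE !subr0 => H.
  rewrite ler_norml in H; case/andP: H => _ H.
  have := HM n; have := HK n; have := ler_norm (s n); lra.
- by rewrite /T (negbTE h) normr0; lra.
Qed.

Lemma ev_both (x y : DX) : linfty_bounded x -> linfty_bounded y ->
  \forall n \near \oo, `|s n *: x n| <= 1 /\ `|s n *: y n| <= 1.
Proof.
move=> bx bY; have [N1 _ H1] := ev_ball x bx; have [N2 _ H2] := ev_ball y bY.
exists (maxn N1 N2) => // n /= Hn; split.
  by apply: H1; apply: leq_trans Hn; exact: leq_maxl.
by apply: H2; apply: leq_trans Hn; exact: leq_maxr.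
Qed.

Lemma T_iso (x y : DX) : linfty_bounded x -> linfty_bounded y ->
  useminorm U (T x - T y) = useminorm U (x - y).
Proof.
move=> bx bY.
pose w := fun n => `|(T x - T y) n| - `|(x - y) n|.
have wc : w @ \oo --> 0.
  apply: (squeeze_cvgr (f := fun n => - s n) (h := s)).
  - have [N _ HN] := ev_both x y bx bY.
    exists N => // n /HN /= [hx hy].
    have := T_diff n x y hx hy; rewrite ler_norml => /andP [h1 h2].
    by rewrite /w; apply/andP; split.
  - rewrite -oppr0; exact: (cvgN s_cvg).
  - exact: s_cvg.
have wb := cvg_bnd wc.
have e : (fun n => `|(T x - T y) n|) = (fun n => `|(x - y) n| + w n).
  by apply: funext => n; rewrite /w [RHS]addrC subrK.
rewrite /useminorm e (ulimD UU) //; last first.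
  exact: (bnd_norm (BB (S := seqSN X UU) bx bY)).
by rewrite (ulim_oo UU Unp wc) addr0.
Qed.


Lemma psiE n (w : Y n) : exists x : X n,
  `|w| <= 1 -> `|x| <= 1 /\ `|phi n x - w| <= eps n.
Proof.
case: (boolP (`|w| <= 1)) => h; first by have [x hx hp] := phiS n w h; exists x.
by exists 0.
Qed.

Definition psiC n (w : Y n) : X n := proj1_sig (cid (psiE n w)).
Lemma psiP n (w : Y n) : `|w| <= 1 -> `|psiC n w| <= 1 /\ `|phi n (psiC n w) - w| <= eps n.
Proof. exact: (proj2_sig (cid (psiE n w))). Qed.

Definition G (y : DY) : DX := fun n =>
  if `|s n *: y n + phi n 0| <= 1 then (s n)^-1 *: psiC n (s n *: y n + phi n 0) else 0.

Lemma Gb (y : DY) : linfty_bounded y -> linfty_bounded (G y).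
Proof.
move=> bY; have [M HM] := bY; have [K HK] := cvg_bnd s_cvg.
exists (M + 2 * K) => n.
have M0 : 0 <= M := le_trans (normr_ge0 _) (HM 0%N).
have K0 : 0 <= K := le_trans (normr_ge0 _) (HK 0%N).
rewrite /G; case: (boolP (`|s n *: y n + phi n 0| <= 1)) => h; last by rewrite normr0; lra.
have [hp1 hp2] := psiP n _ h.
set w := s n *: y n + phi n 0 in h hp1 hp2 *.
set x' := psiC n w in hp1 hp2 *.
have sp := s_gt0 n.
have h0 : `|(0 : X n)| <= 1 by rewrite normr0 ler01.
have t1 := phiI' n x' 0 hp1 h0; rewrite subr0 ler_norml in t1; case/andP: t1 => t1 _.
have t2 : `|phi n x' - phi n 0| <= `|phi n x' - w| + `|w - phi n 0|.
  have -> : phi n x' - phi n 0 = (phi n x' - w) + (w - phi n 0) by rewrite addrA subrK.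
  exact: ler_normD.
have ew : w - phi n 0 = s n *: y n by rewrite /w addrK.
rewrite ew normrZ (ger0_norm (ltW sp)) in t2.
have := eps_le_eta n; have := HM n; have := HK n; have := ler_norm (s n) => a1 a2 a3 a4.
have si : 0 <= (s n)^-1 by rewrite invr_ge0 ltW.
rewrite normrZ (ger0_norm si) mulrC ler_pdivrMr //.
rewrite mulrDl (mulrC (2 * K)).
have : `|x'| <= 2 * eta n + s n * `|y n| by lra.
move/le_trans; apply.
rewrite -ss.
have : s n * `|y n| <= M * s n by rewrite mulrC; apply: ler_wpM2r; [exact: ltW|].
have : s n * s n <= s n * K by apply: ler_wpM2l; [exact: ltW| lra].
lra.
Qed.


Lemma TG (y : DY) : linfty_bounded y -> eqv (seqSN Y UU) (T (G y)) y.
Proof.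
move=> bY; have [M HM] := bY.
have M'0 : 0 < 2 * (`|M| + 1) by have := normr_ge0 M; lra.
have e1 : 0 < (2 * (`|M| + 1))^-1 by rewrite invr_gt0.
have e2 : 0 < (4 : R)^-1 by rewrite invr_gt0.
have [N1 _ H1] := ev_small _ _ s_cvg e1.
have [N2 _ H2] := ev_small _ _ eta_cvg e2.
pose v := fun n => `|(T (G y) - y) n|.
have vc : v @ \oo --> 0.
  apply: (squeeze_cvgr (f := fun n => 0) (h := s)); last first.
  - exact: s_cvg.
  - exact: cvg_cst.
  exists (maxn N1 N2) => // n /= Hn.
  have hs1 : s n <= (2 * (`|M| + 1))^-1.
    by apply: H1; apply: leq_trans Hn; exact: leq_maxl.
  have he : eta n <= 4^-1.
    by apply: H2; apply: leq_trans Hn; exact: leq_maxr.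
  have sp := s_gt0 n.
  have si : 0 <= (s n)^-1 by rewrite invr_ge0 ltW.
  apply/andP; split; first exact: normr_ge0.
  set w := s n *: y n + phi n 0.
  have hw : `|w| <= 1.
    apply: le_trans (ler_normD _ _) _.
    rewrite normrZ (ger0_norm (ltW sp)).
    have := phi0 n.
    have : s n * `|y n| <= (2 * (`|M| + 1))^-1 * (`|M| + 1).
      apply: ler_pM => //; first exact: ltW.
      by have := HM n; have := ler_norm M; lra.
    have k0 : `|M| + 1 != 0 by rewrite gt_eqF //; have := normr_ge0 M; lra.
    rewrite invfM -mulrA mulVf // mulr1.
    have h4 : 2 * (4 : R)^-1 = 2^-1 by field.
    have h2 : (2 : R)^-1 + 2^-1 = 1 by field.
    lra.
  have [hp1 hp2] := psiP n _ hw.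
  have eG : G y n = (s n)^-1 *: psiC n w by rewrite /G -/w hw.
  have hsG : s n *: G y n = psiC n w.
    by rewrite eG scalerA mulfV ?scale1r // gt_eqF.
  have eT : T (G y) n = (s n)^-1 *: (phi n (psiC n w) - phi n 0).
    by rewrite /T hsG hp1.
  rewrite /v dprod_addE dprod_oppE eT.
  have -> : (s n)^-1 *: (phi n (psiC n w) - phi n 0) - y n =
            (s n)^-1 *: (phi n (psiC n w) - w).
    rewrite /w opprD addrA !scalerBr scalerA mulVf ?scale1r ?gt_eqF //.
    by rewrite addrAC.
  rewrite normrZ (ger0_norm si) -[X in _ <= X]eta_s.
  apply: ler_wpM2l => //; apply: le_trans hp2 _; exact: eps_le_eta.
exact: (ulim_oo UU Unp vc).
Qed.


Theorem construct_iso : ultraproducts_isometric X Y U.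
Proof.
have Fiso : iso (seqSN X UU) (seqSN Y UU) T.
  by split; [exact: Tb | exact: T_iso].
have Giso := iso_from_inv Fiso Gb TG.
exists T; split.
- exact: Tb.
- move=> a x y bx bY; exact: (MU_lin Fiso Giso TG T0 a bx bY).
- move=> x bx; have := T_iso x 0 bx (lb0 X).
  by rewrite T0 !subr0.
- move=> y bY; exists (G y); [exact: Gb | exact: TG].
Qed.

End Construct.
Set Implicit Arguments.
Section Approx.
Variable R : realType.

Definition good (X0 Y0 : normedModType R) (phi : X0 -> Y0) (e : R) :=
  [/\ (forall x, `|x| <= 1 -> `|phi x| <= 1),
      (forall x y, `|x| <= 1 -> `|y| <= 1 -> `| `|phi x - phi y| - `|x - y| | <= e) &
      (forall y, `|y| <= 1 -> exists2 x, `|x| <= 1 & `|phi x - y| <= e)].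

Lemma good_triv (X0 Y0 : normedModType R) : good (fun _ : X0 => (0 : Y0)) 2.
Proof.
split => [x _|x y hx hy|y hy]; first by rewrite normr0 ler01.
  rewrite subrr normr0 sub0r normrN normr_id.
  apply: le_trans (ler_normB _ _) _; lra.
by exists 0; rewrite ?normr0 ?ler01 // sub0r normrN; lra.
Qed.

Lemma good_approx (X0 Y0 : normedModType R) (g : R) :
  (dGH X0 Y0 < g%:E)%E -> exists phi : X0 -> Y0, good phi (2 * g).
Proof.
move=> /ereal_inf_lt [r [Z [d [f [g' [dm fi gi ->]]]]] hr].
case: dm => [d0 [d_eq [d_sym d_tri]]].
move: hr; rewrite /hausdorff_dist gt_max => /andP [h1 h2].
have Hc : forall x : X0, exists yb : Y0, `|x| <= 1 -> `|yb| <= 1 /\ d (f x) (g' yb) < g.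
  move=> x; case: (boolP (`|x| <= 1)) => hx; last by exists 0.
  have : (ereal_inf [set (d (f x) b)%:E | b in g' @` @unit_ball R Y0] < g%:E)%E.
    apply: le_lt_trans h1; apply: ereal_sup_ubound.
    by exists (f x) => //; exists x.
  move=> /ereal_inf_lt [_ [_ [yb hyb <-] <-]]; rewrite lte_fin => hd.
  by exists yb.
pose phi x := proj1_sig (cid (Hc x)).
have phiP x : `|x| <= 1 -> `|phi x| <= 1 /\ d (f x) (g' (phi x)) < g.
  exact: (proj2_sig (cid (Hc x))).
exists phi; split.
- by move=> x /phiP [].
- move=> x y hx hy.
  have [px dx] := phiP x hx; have [py dy] := phiP y hy.
  rewrite -(gi _ _ px py) -(fi _ _ hx hy).
  have t1 := d_tri (g' (phi x)) (f x) (g' (phi y)).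
  have t2 := d_tri (f x) (f y) (g' (phi y)).
  have t3 := d_tri (f x) (g' (phi x)) (f y).
  have t4 := d_tri (g' (phi x)) (g' (phi y)) (f y).
  rewrite (d_sym (g' (phi x)) (f x)) in t1.
  rewrite (d_sym (g' (phi y)) (f y)) in t4.
  rewrite ler_norml; apply/andP; split; lra.
- move=> y hy.
  have : (ereal_inf [set (d a (g' y))%:E | a in f @` @unit_ball R X0] < g%:E)%E.
    apply: le_lt_trans h2; apply: ereal_sup_ubound.
    by exists (g' y) => //; exists y.
  move=> /ereal_inf_lt [_ [_ [x hx <-] <-]]; rewrite lte_fin => hd.
  exists x => //.
  have [px dx] := phiP x hx.
  rewrite -(gi _ _ px hy).
  have := d_tri (g' (phi x)) (f x) (g' y).
  rewrite (d_sym (g' (phi x)) (f x)); lra.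
Qed.
End Approx.
Theorem proposition3p5 (R : realType) (X Y : nat -> completeNormedModType R) :
  (fun n => dGH (X n) (Y n)) @ \oo --> 0%:E ->
  forall U : set_system nat, UltraFilter U -> (forall n : nat, ~ U [set n]) ->
  ultraproducts_isometric X Y U.
Proof.
move=> H U UU Unp.
pose D n := dGH (X n) (Y n).
pose gn n := fine (D n) + harmonic n.
have Hex n : exists e : R, exists phi : X n -> Y n,
    good phi e /\ ((D n < (gn n)%:E)%E -> e = 2 * gn n).
  case: (boolP (D n < (gn n)%:E)%E) => hc.
  - have [phi hphi] := good_approx hc.
    by exists (2 * gn n), phi.
  - by exists 2, (fun _ => 0); split => //; exact: good_triv.
pose eps n := proj1_sig (cid (Hex n)).
have Hphi n : exists phi : X n -> Y n, good phi (eps n) /\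
    ((D n < (gn n)%:E)%E -> eps n = 2 * gn n) := proj2_sig (cid (Hex n)).
pose phi n := proj1_sig (cid (Hphi n)).
have phiP n : good (phi n) (eps n) /\ ((D n < (gn n)%:E)%E -> eps n = 2 * gn n).
  exact: (proj2_sig (cid (Hphi n))).
have [Hfin Hfine] := (fine_cvgP D 0).1 H.
have hg : gn @ \oo --> 0.
  have := cvgD Hfine (@cvg_harmonic R); rewrite addr0 => h; exact: h.
have h2g : (fun n => 2 * gn n) @ \oo --> 0.
  have := cvgMr (a := 2) hg; rewrite mulr0 => h; exact: h.
have epsc : eps @ \oo --> 0.
  apply: cvg_trans h2g; apply: near_eq_cvg.
  move: Hfin => [N _ HN]; exists N => // n /HN /= hf.
  have hlt : (D n < (gn n)%:E)%E.
    by rewrite -(fineK hf) lte_fin /gn ltrDl; exact: harmonic_gt0.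
  by rewrite ((phiP n).2 hlt).
apply: (@construct_iso R (fun n => X n) (fun n => Y n) U UU Unp phi eps epsc).
- by move=> n x; case: (phiP n).1 => hB _ _; exact: hB.
- by move=> n x y; case: (phiP n).1 => _ hI _; exact: hI.
- by move=> n y; case: (phiP n).1 => _ _ hS; exact: hS.
Qed.
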